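(* Let $n\ge2$ and consider the system \[\dot y=z^2(n+1-y)-ny,\qquad \dot z=\tfrac{n+1}{n}z(n-1+y)-(n+z^2)z.\] Let $D=\{(y,z)\in\mathbb R^2_{>0}:\tfrac{z^2(n+1)}{z^2+n}\le y<1\}$. Then $(0,0)$ is a global attractor of this system on $D$: for every initial condition $(y_0,z_0)\in D$ the solution exists for all $t\ge0$ and $(y(t),z(t))\to(0,0)$ as $t\to\infty$. *)

(* Defs.v *)
From Stdlib Require Import Reals.
From Coquelicot Require Import Coquelicot.
Open Scope R_scope.

Definition fy (n : nat) (y z : R) : R :=
  z ^ 2 * (INR n + 1 - y) - INR n * y.
Definition fz (n : nat) (y z : R) : R :=
  (INR n + 1) / INR n * z * (INR n - 1 + y) - (INR n + z ^ 2) * z.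

Definition in_D (n : nat) (y z : R) : Prop :=
  0 < y /\ 0 < z /\ z ^ 2 * (INR n + 1) / (z ^ 2 + INR n) <= y /\ y < 1.

Definition is_solution_on_pos (n : nat) (y z : R -> R) (y0 z0 : R) : Prop :=
  y 0 = y0 /\ z 0 = z0 /\
  filterlim y (at_right 0) (locally y0) /\
  filterlim z (at_right 0) (locally z0) /\
  (forall t, 0 < t -> is_derive y t (fy n (y t) (z t)) /\
                      is_derive z t (fz n (y t) (z t))).

(* Main.v *)
Require Import Defs.
From Stdlib Require Import Reals Lra Lia Psatz.
From Coquelicot Require Import Coquelicot.
Open Scope R_scope.

Lemma cont_eps (f : R -> R) x : continuous f x ->
  forall eps, 0 < eps -> exists d, 0 < d /\ forall t, Rabs (t - x) < d -> Rabs (f t - f x) < eps.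
Proof.
  intros Hc eps Heps.
  assert (H := Hc (ball (f x) eps) (locally_ball (f x) (mkposreal eps Heps))).
  destruct H as [d Hd]. exists d. split; [apply cond_pos|].
  intros t Ht. apply (Hd t). exact Ht.
Qed.

Definition RC (f : R -> R) (a : R) : Prop :=
  forall eps, 0 < eps -> exists d, 0 < d /\ forall t, a <= t < a + d -> Rabs (f t - f a) < eps.

Lemma RC_at_right f a : filterlim f (at_right a) (locally (f a)) -> RC f a.
Proof.
  intros Hc eps Heps.
  assert (H := Hc (ball (f a) eps) (locally_ball (f a) (mkposreal eps Heps))).
  destruct H as [d Hd]. exists d. split; [apply cond_pos|].
  intros t Ht. destruct (Req_dec t a) as [->|Hne].
  - rewrite Rminus_eq_0, Rabs_R0; exact Heps.
  - apply (Hd t).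
    + change (Rabs (t - a) < d). rewrite Rabs_right; lra.
    + lra.
Qed.

Lemma RC_cont f a : continuous f a -> RC f a.
Proof.
  intros Hc eps Heps. destruct (cont_eps f a Hc eps Heps) as [d [Hd H]].
  exists d; split; auto. intros t Ht. apply H. rewrite Rabs_right; lra.
Qed.

Lemma RC_derive f a d : is_derive f a d -> RC f a.
Proof.
  intro H. apply RC_cont. apply (@ex_derive_continuous R_AbsRing R_NormedModule f a). exists d. exact H.
Qed.

Lemma RC2 (f g : R -> R) (P : R -> R -> R) a :
  RC f a -> RC g a -> continuity_2d_pt P (f a) (g a) ->
  RC (fun t => P (f t) (g t)) a.
Proof.
  intros Hf Hg HP eps Heps.
  destruct (HP (mkposreal eps Heps)) as [del Hdel].
  destruct (Hf del (cond_pos del)) as [d1 [Hd1 H1]].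
  destruct (Hg del (cond_pos del)) as [d2 [Hd2 H2]].
  exists (Rmin d1 d2). split. apply Rmin_pos; auto.
  intros t Ht. apply (Hdel (f t) (g t)).
  - apply H1. pose proof (Rmin_l d1 d2). lra.
  - apply H2. pose proof (Rmin_r d1 d2). lra.
Qed.

Lemma mono_up (f : R -> R) a b : a < b -> RC f a ->
  (forall t, a < t <= b -> exists d, is_derive f t d /\ 0 <= d) -> f a <= f b.
Proof.
  intros Hab Hrc Hd.
  assert (Key : forall e, a < e < b -> f e <= f b).
  { intros e He.
    assert (Hx : forall x, e <= x <= b -> is_derive f x (Derive f x) /\ 0 <= Derive f x).
    { intros x Hx. destruct (Hd x) as [d [H1 H2]]. lra.
      rewrite (is_derive_unique f x d H1). split; auto. }
    destruct (MVT_gen f e b (Derive f)) as [c [Hc Heq]].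
    - intros x Hx0. rewrite Rmin_left in Hx0 by lra. rewrite Rmax_right in Hx0 by lra.
      apply Hx; lra.
    - intros x Hx0. rewrite Rmin_left in Hx0 by lra. rewrite Rmax_right in Hx0 by lra.
      apply continuity_pt_filterlim. apply (@ex_derive_continuous R_AbsRing R_NormedModule f x).
      exists (Derive f x). apply Hx. lra.
    - rewrite Rmin_left in Hc by lra. rewrite Rmax_right in Hc by lra.
      destruct (Hx c Hc) as [_ Hpos].
      assert (0 <= Derive f c * (b - e)) by (apply Rmult_le_pos; lra). lra. }
  destruct (Rle_lt_dec (f a) (f b)) as [|Hlt]; auto.
  destruct (Hrc (f a - f b)) as [d [Hdp Hd']]. lra.
  set (e := a + Rmin d (b - a) / 2).
  assert (0 < Rmin d (b - a)) by (apply Rmin_pos; lra).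
  pose proof (Rmin_l d (b - a)). pose proof (Rmin_r d (b - a)).
  assert (He : a < e < b) by (unfold e; lra).
  specialize (Key e He). specialize (Hd' e). 
  assert (Rabs (f e - f a) < f a - f b) by (apply Hd'; unfold e; lra).
  apply Rabs_def2 in H2. lra.
Qed.

Lemma mono_down (f : R -> R) a b : a < b -> RC f a ->
  (forall t, a < t <= b -> exists d, is_derive f t d /\ d <= 0) -> f b <= f a.
Proof.
  intros Hab Hrc Hd.
  assert (- f a <= - f b); [|lra].
  apply (mono_up (fun t => - f t)); auto.
  - intros eps Heps. destruct (Hrc eps Heps) as [d [Hd0 H]]. exists d; split; auto.
    intros t Ht. replace (- f t - - f a) with (- (f t - f a)) by ring. rewrite Rabs_Ropp. auto.
  - intros t Ht. destruct (Hd t Ht) as [d [H1 H2]]. exists (- d). split; [|lra].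
    apply (is_derive_opp f t d H1).
Qed.

Lemma cont_ind (Q : R -> Prop) :
  (forall s, 0 <= s -> (forall t, 0 <= t < s -> Q t) -> Q s) ->
  (forall s, 0 <= s -> (forall t, 0 <= t <= s -> Q t) ->
     exists d, 0 < d /\ forall t, s < t < s + d -> Q t) ->
  forall t, 0 <= t -> Q t.
Proof.
  intros H1 H2 t1 Ht1.
  destruct (Classical_Prop.classic (Q t1)) as [|HnQ]; auto. exfalso.
  set (E := fun s => 0 <= s /\ forall u, 0 <= u <= s -> Q u).
  assert (HQ0 : Q 0) by (apply H1; [lra| intros; lra]).
  assert (Hb : bound E).
  { exists t1. intros s [Hs Hu]. destruct (Rle_lt_dec s t1) as [|Hlt]; auto.
    exfalso. apply HnQ. apply Hu. lra. }
  assert (Hne : exists x, E x).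
  { exists 0. split; [lra|]. intros u Hu. replace u with 0 by lra. exact HQ0. }
  destruct (completeness E Hb Hne) as [m [Hub Hlub]].
  assert (Hm0 : 0 <= m) by (apply Hub; split; [lra|]; intros u Hu; replace u with 0 by lra; exact HQ0).
  assert (Hbelow : forall u, 0 <= u < m -> Q u).
  { intros u Hu. destruct (Classical_Prop.classic (Q u)) as [|Hn]; auto. exfalso.
    assert (m <= u); [|lra]. apply Hlub. intros s [Hs Hs']. 
    destruct (Rle_lt_dec s u) as [|Hlt]; auto. exfalso. apply Hn. apply Hs'. lra. }
  assert (HQm : Q m) by (apply H1; auto).
  assert (Hupto : forall u, 0 <= u <= m -> Q u).
  { intros u Hu. destruct (Req_dec u m) as [->|]; auto. apply Hbelow. lra. }
  destruct (H2 m Hm0 Hupto) as [d [Hd Hd']].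
  assert (E (m + d/2)).
  { split; [lra|]. intros u Hu. destruct (Rle_lt_dec u m). apply Hupto; lra. apply Hd'; lra. }
  assert (m + d/2 <= m) by (apply Hub; auto). lra.
Qed.

Ltac cont2 :=
  repeat first [ apply continuity_2d_pt_id1 | apply continuity_2d_pt_id2
               | apply continuity_2d_pt_const
               | apply continuity_2d_pt_plus | apply continuity_2d_pt_minus
               | apply continuity_2d_pt_mult | apply continuity_2d_pt_opp ].

Lemma is_derive_eqv (f : R -> R) (x l l' : R) : is_derive f x l -> l = l' -> is_derive f x l'.
Proof. intros H <-; exact H. Qed.

Lemma der_mult (f g : R -> R) (x df dg : R) : is_derive f x df -> is_derive g x dg ->
  is_derive (fun t => f t * g t) x (df * g x + f x * dg).
Proof. intros Hf Hg. apply (is_derive_mult f g x df dg Hf Hg). intros; apply Rmult_comm. Qed.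

Lemma der_plus (f g : R -> R) (x df dg : R) : is_derive f x df -> is_derive g x dg ->
  is_derive (fun t => f t + g t) x (df + dg).
Proof. intros Hf Hg. apply (is_derive_plus f g x df dg Hf Hg). Qed.

Lemma der_minus (f g : R -> R) (x df dg : R) : is_derive f x df -> is_derive g x dg ->
  is_derive (fun t => f t - g t) x (df - dg).
Proof. intros Hf Hg. apply (is_derive_minus f g x df dg Hf Hg). Qed.

Lemma der_const (c x : R) : is_derive (fun _ => c) x 0.
Proof. apply (is_derive_const c x). Qed.

Lemma der_sq (f : R -> R) (x df : R) : is_derive f x df -> is_derive (fun t => f t ^ 2) x (2 * f x * df).
Proof.
  intro H. apply (is_derive_eqv _ _ (df * f x + f x * df)).
  - apply (is_derive_ext (fun t => f t * f t)). intros t0; simpl; ring. apply der_mult; auto.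
  - ring.
Qed.

Lemma der_exp_lin (c x : R) : is_derive (fun t => exp (c * t)) x (c * exp (c * x)).
Proof. auto_derive. auto. ring. Qed.

Definition hf (n : nat) (y z : R) : R := y * (z ^ 2 + INR n) - (INR n + 1) * z ^ 2.

Definition Hh (n : nat) (u v : R) : R :=
  fy n u v * (v ^ 2 + INR n) + u * (2 * v * fz n u v) - (INR n + 1) * (2 * v * fz n u v).

Lemma D_h n (y z : R -> R) (t dy dz : R) : is_derive y t dy -> is_derive z t dz ->
  is_derive (fun t => hf n (y t) (z t)) t
    (dy * (z t ^ 2 + INR n) + y t * (2 * z t * dz) - (INR n + 1) * (2 * z t * dz)).
Proof.
  intros Hy Hz. unfold hf.
  eapply is_derive_eqv.
  apply (der_minus (fun t => y t * (z t ^ 2 + INR n)) (fun t => (INR n + 1) * z t ^ 2)).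
  apply (der_mult y (fun t => z t ^ 2 + INR n)). exact Hy.
  apply (der_plus (fun t => z t ^ 2) (fun _ => INR n)). apply der_sq; exact Hz. apply der_const.
  apply (der_mult (fun _ => INR n + 1) (fun t => z t ^ 2)). apply der_const. apply der_sq; exact Hz.
  ring.
Qed.

Lemma D_Z (z : R -> R) (t dz : R) : is_derive z t dz ->
  is_derive (fun t => z t * exp (2 * t)) t (dz * exp (2 * t) + z t * (2 * exp (2 * t))).
Proof. intros Hz. apply (der_mult z (fun t => exp (2 * t))). exact Hz. apply der_exp_lin. Qed.

Lemma fy_h n y z : fy n y z = - hf n y z.
Proof. unfold fy, hf. ring. Qed.

Lemma fz_id n y z : INR n <> 0 ->
  fz n y z * (z ^ 2 + INR n) = z * (INR n + 1) * hf n y z / INR n - z * (1 - z ^ 2) ^ 2.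
Proof. intro HN. unfold fz, hf. field. auto. Qed.

Lemma Hh_pos n y z : (2 <= n)%nat -> 0 < y < 1 -> 0 < z < 1 -> hf n y z = 0 -> 0 < Hh n y z.
Proof.
  intros hn Hy Hz Hh0.
  assert (HN : 2 <= INR n) by (apply (le_INR 2 n) in hn; simpl in hn; lra).
  assert (Hfz : fz n y z * (z ^ 2 + INR n) = - z * (1 - z ^ 2) ^ 2).
  { rewrite fz_id by lra. rewrite Hh0. field. lra. }
  unfold Hh. rewrite fy_h, Hh0.
  assert (Hp : 0 < z ^ 2 + INR n) by nra.
  assert (Hfz' : fz n y z = - z * (1 - z ^ 2) ^ 2 / (z ^ 2 + INR n)).
  { apply (Rmult_eq_reg_r (z ^ 2 + INR n)); [|lra]. rewrite Hfz. field. lra. }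
  rewrite Hfz'.
  assert (0 < (1 - z ^ 2) ^ 2) by (apply pow_lt; nra).
  assert (0 < z * z * (1 - z ^ 2) ^ 2 / (z ^ 2 + INR n)).
  { apply Rdiv_lt_0_compat; auto. apply Rmult_lt_0_compat; nra. }
  replace (- 0 * (z ^ 2 + INR n) + y * (2 * z * (- z * (1 - z ^ 2) ^ 2 / (z ^ 2 + INR n))) -
    (INR n + 1) * (2 * z * (- z * (1 - z ^ 2) ^ 2 / (z ^ 2 + INR n))))
    with (2 * (INR n + 1 - y) * (z * z * (1 - z ^ 2) ^ 2 / (z ^ 2 + INR n))) by (field; lra).
  apply Rmult_lt_0_compat; lra.
Qed.

Lemma Z_pos n y z : (2 <= n)%nat -> 0 < y < 1 -> 0 < z < 1 -> 0 < fz n y z + 2 * z.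
Proof.
  intros hn Hy Hz.
  assert (HN : 2 <= INR n) by (apply (le_INR 2 n) in hn; simpl in hn; lra).
  replace (fz n y z + 2 * z) with (z * ((INR n + 1) * y / INR n + (1 - 1 / INR n) + (1 - z ^ 2)))
    by (unfold fz; field; lra).
  apply Rmult_lt_0_compat; [lra|].
  assert (0 < (INR n + 1) * y / INR n) by (apply Rdiv_lt_0_compat; nra).
  assert (1 / INR n <= 1 / 2) by (apply Rmult_le_compat_l; [lra| apply Rinv_le_contravar; lra]).
  nra.
Qed.

Lemma continuity_2d_pt_pow f x y k : continuity_2d_pt f x y -> continuity_2d_pt (fun u v => f u v ^ k) x y.
Proof.
  intro H. induction k as [|k IH]; simpl.
  - apply continuity_2d_pt_const.
  - apply (continuity_2d_pt_mult f (fun u v => f u v ^ k)); auto.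
Qed.

Ltac cont2' :=
  repeat first [ apply continuity_2d_pt_id1 | apply continuity_2d_pt_id2
               | apply continuity_2d_pt_const
               | apply continuity_2d_pt_plus | apply continuity_2d_pt_minus
               | apply continuity_2d_pt_mult | apply continuity_2d_pt_opp
               | apply continuity_2d_pt_pow ].

Definition Qs n (y z : R -> R) (y0 z0 t : R) : Prop :=
  0 <= hf n (y t) (z t) /\ y t <= y0 /\ z0 <= z t * exp (2 * t).

Lemma INR_ge2 n : (2 <= n)%nat -> 2 <= INR n.
Proof. intro hn. apply (le_INR 2 n) in hn. simpl in hn. lra. Qed.

Lemma D_to_h n y z : (2 <= n)%nat -> in_D n y z -> 0 <= hf n y z.
Proof.
  intros hn [Hy [Hz [H1 H2]]]. pose proof (INR_ge2 n hn).
  assert (Hp : 0 < z ^ 2 + INR n) by nra.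
  apply (Rmult_le_compat_r (z ^ 2 + INR n)) in H1; [|lra].
  replace (z ^ 2 * (INR n + 1) / (z ^ 2 + INR n) * (z ^ 2 + INR n)) with (z ^ 2 * (INR n + 1)) in H1 by (field; lra).
  unfold hf. nra.
Qed.

Lemma Q_facts n (hn : (2 <= n)%nat) y0 z0 yt zt t : in_D n y0 z0 ->
  0 <= hf n yt zt -> yt <= y0 -> z0 <= zt * exp (2 * t) ->
  0 < yt < 1 /\ 0 < zt < 1 /\ zt ^ 2 <= yt /\ in_D n yt zt.
Proof.
  intros [Hy0 [Hz0 [_ Hy01]]] Hh Hyt HZ. pose proof (INR_ge2 n hn).
  assert (He := exp_pos (2 * t)).
  assert (Hzt : 0 < zt) by nra.
  unfold hf in Hh.
  assert (Hyp : 0 < yt) by nra.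
  assert (Hzy : zt ^ 2 <= yt) by nra.
  assert (Hz1 : zt < 1) by nra.
  split; [lra|]. split; [lra|]. split; auto.
  split; auto. split; auto. split; [|lra].
  assert (Hp : 0 < zt ^ 2 + INR n) by nra.
  apply (Rmult_le_reg_r (zt ^ 2 + INR n)); auto.
  replace (zt ^ 2 * (INR n + 1) / (zt ^ 2 + INR n) * (zt ^ 2 + INR n)) with (zt ^ 2 * (INR n + 1)) by (field; lra).
  nra.
Qed.

Lemma closed_ge (phi : R -> R) s d : 0 < s -> is_derive phi s d ->
  (forall t, 0 <= t < s -> 0 <= phi t) -> 0 <= phi s.
Proof.
  intros Hs Hd Hb.
  destruct (Rle_lt_dec 0 (phi s)) as [|Hlt]; auto. exfalso.
  assert (Hc : continuous phi s) by (apply (@ex_derive_continuous R_AbsRing R_NormedModule phi s); exists d; exact Hd).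
  destruct (cont_eps phi s Hc (- phi s)) as [e [He H]]; [lra|].
  set (t := s - Rmin e s / 2).
  assert (0 < Rmin e s) by (apply Rmin_pos; lra).
  pose proof (Rmin_l e s). pose proof (Rmin_r e s).
  assert (Rabs (phi t - phi s) < - phi s) by (apply H; unfold t; rewrite Rabs_left; lra).
  assert (0 <= phi t) by (apply Hb; unfold t; lra).
  apply Rabs_def2 in H3. lra.
Qed.

Lemma RC_id s : RC (fun t => t) s.
Proof. intros eps He. exists eps. split; auto. intros t Ht. rewrite Rabs_right; lra. Qed.

Lemma invariance n (hn : (2 <= n)%nat) (y z : R -> R) (y0 z0 : R) :
  in_D n y0 z0 -> y 0 = y0 -> z 0 = z0 -> RC y 0 -> RC z 0 ->
  (forall t, 0 < t -> exists dy dz : R, is_derive y t dy /\ is_derive z t dz /\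
      (0 < y t < 1 -> 0 < z t < 1 -> dy = fy n (y t) (z t) /\ dz = fz n (y t) (z t))) ->
  forall t, 0 <= t -> Qs n y z y0 z0 t.
Proof.
  intros HD Hy0 Hz0 Hry Hrz Hd. pose proof (INR_ge2 n hn) as HN.
  assert (RCs : forall s, 0 <= s -> RC y s /\ RC z s).
  { intros s Hs. destruct (Req_dec s 0) as [->|]. auto.
    destruct (Hd s) as [dy [dz [H1 [H2 _]]]]. lra. split; eapply RC_derive; eauto. }
  apply cont_ind.
  - intros s Hs Hbefore. destruct (Req_dec s 0) as [->|Hs0].
    + unfold Qs. rewrite Hy0, Hz0, Rmult_0_r, exp_0, Rmult_1_r.
      split; [apply D_to_h; auto | lra].
    + assert (Hsp : 0 < s) by lra.
      destruct (Hd s Hsp) as [dy [dz [Dy [Dz _]]]].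
      split; [|split].
      * eapply (closed_ge (fun t => hf n (y t) (z t)) s _ Hsp (D_h n y z s dy dz Dy Dz)).
        intros t Ht. apply Hbefore; auto.
      * assert (0 <= y0 - y s); [|lra].
        apply (closed_ge (fun t => y0 - y t) s (0 - dy) Hsp).
        apply (der_minus (fun _ => y0) y). apply der_const. exact Dy.
        intros t Ht. destruct (Hbefore t Ht) as [_ [H _]]. lra.
      * assert (0 <= z s * exp (2 * s) - z0); [|lra].
        eapply (closed_ge (fun t => z t * exp (2 * t) - z0) s _ Hsp).
        apply (der_minus (fun t => z t * exp (2 * t)) (fun _ => z0)). apply D_Z. exact Dz. apply der_const.
        intros t Ht. destruct (Hbefore t Ht) as [_ [_ H]]. lra.
  - intros s Hs Hupto.
    destruct (Hupto s) as [Hhs [Hys HZs]]; [lra|].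
    destruct (Q_facts n hn y0 z0 (y s) (z s) s HD Hhs Hys HZs) as [Hyb [Hzb [Hzy _]]].
    destruct (RCs s Hs) as [RCy RCz].
    set (eps := Rmin (Rmin (y s) (1 - y s)) (Rmin (z s) (1 - z s))).
    assert (Heps : 0 < eps) by (unfold eps; repeat apply Rmin_pos; lra).
    assert (Heps1 : eps <= y s /\ eps <= 1 - y s /\ eps <= z s /\ eps <= 1 - z s).
    { unfold eps. pose proof (Rmin_l (Rmin (y s) (1 - y s)) (Rmin (z s) (1 - z s))).
      pose proof (Rmin_r (Rmin (y s) (1 - y s)) (Rmin (z s) (1 - z s))).
      pose proof (Rmin_l (y s) (1 - y s)). pose proof (Rmin_r (y s) (1 - y s)).
      pose proof (Rmin_l (z s) (1 - z s)). pose proof (Rmin_r (z s) (1 - z s)). lra. }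
    destruct (RCy eps Heps) as [d1 [Hd1 Hy1]].
    destruct (RCz eps Heps) as [d2 [Hd2 Hz2]].
    set (del := Rmin d1 d2).
    assert (Hdel : 0 < del) by (apply Rmin_pos; auto).
    assert (Box : forall t, s <= t < s + del -> 0 < y t < 1 /\ 0 < z t < 1).
    { intros t Ht. pose proof (Rmin_l d1 d2). pose proof (Rmin_r d1 d2).
      assert (A1 := Hy1 t ltac:(unfold del in Ht; lra)).
      assert (A2 := Hz2 t ltac:(unfold del in Ht; lra)).
      apply Rabs_def2 in A1. apply Rabs_def2 in A2. lra. }
    assert (Der : forall t, s < t < s + del ->
      is_derive y t (fy n (y t) (z t)) /\ is_derive z t (fz n (y t) (z t))).
    { intros t Ht. destruct (Hd t) as [dy [dz [H1 [H2 H3]]]]. lra.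
      destruct (Box t) as [B1 B2]. lra. destruct (H3 B1 B2) as [-> ->]. auto. }
    assert (RCh : RC (fun t => hf n (y t) (z t)) s).
    { apply (RC2 y z (hf n)); auto. unfold hf. cont2'. }
    assert (Hhpos : exists d3, 0 < d3 /\ d3 <= del /\
              forall t, s < t < s + d3 -> 0 <= hf n (y t) (z t)).
    { destruct (Rle_lt_or_eq_dec 0 _ Hhs) as [Hlt|Heq].
      - destruct (RCh _ Hlt) as [d [Hd0 Hd']].
        exists (Rmin d del). split; [apply Rmin_pos; auto|]. split; [apply Rmin_r|].
        intros t Ht. pose proof (Rmin_l d del).
        assert (A := Hd' t ltac:(lra)). apply Rabs_def2 in A. lra.
      - assert (HP : 0 < Hh n (y s) (z s)) by (apply Hh_pos; auto).
        assert (RCH : RC (fun t => Hh n (y t) (z t)) s).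
        { apply (RC2 y z (Hh n)); auto. unfold Hh, fy, fz. cont2'. }
        destruct (RCH _ HP) as [d [Hd0 Hd']].
        exists (Rmin d del). split; [apply Rmin_pos; auto|]. split; [apply Rmin_r|].
        intros t Ht. pose proof (Rmin_l d del). pose proof (Rmin_r d del).
        rewrite Heq. apply (mono_up (fun t => hf n (y t) (z t)) s t); [lra|auto|].
        intros u Hu. destruct (Der u) as [D1 D2]; [lra|].
        eexists; split. apply (D_h n y z u _ _ D1 D2).
        assert (A := Hd' u ltac:(lra)). apply Rabs_def2 in A. unfold Hh in A. lra. }
    destruct Hhpos as [d3 [Hd3 [Hd3le Hh3]]].
    exists d3. split; auto. intros t Ht. unfold Qs. split; [|split].
    + apply Hh3; auto.
    + assert (y t <= y s); [|lra].
      apply (mono_down y s t); [lra|auto|].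
      intros u Hu. destruct (Der u) as [D1 D2]; [lra|].
      exists (fy n (y u) (z u)). split; auto. rewrite fy_h.
      assert (0 <= hf n (y u) (z u)) by (apply Hh3; lra). lra.
    + assert (z s * exp (2 * s) <= z t * exp (2 * t)); [|lra].
      apply (mono_up (fun t => z t * exp (2 * t)) s t); [lra| |].
      * apply (RC2 z (fun t => t) (fun u v => u * exp (2 * v))); auto. apply RC_id.
        apply (continuity_2d_pt_mult (fun u _ => u) (fun _ v => exp (2 * v))). apply continuity_2d_pt_id1.
        apply (continuity_1d_2d_pt_comp exp (fun _ v => 2 * v)).
        apply derivable_continuous_pt. apply derivable_pt_exp. cont2'.
      * intros u Hu. destruct (Der u) as [D1 D2]; [lra|].
        eexists; split. apply (D_Z z u _ D2).
        destruct (Box u) as [B1 B2]; [lra|].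
        pose proof (Z_pos n (y u) (z u) hn B1 B2). pose proof (exp_pos (2 * u)). nra.
Qed.

Lemma Vdot_bound n (hn : (2 <= n)%nat) y0 y z : y0 < 1 -> 0 < y < 1 -> 0 < z < 1 -> y <= y0 ->
  0 <= hf n y z -> z ^ 2 <= y ->
  fy n y z + (1/3) * (2 * z * fz n y z) <= - ((1 - y0) ^ 2 / (3 * (INR n + 1))) * (y + (1/3) * z ^ 2).
Proof.
  intros Hy01 Hy Hz Hyy0 Hh Hzy. pose proof (INR_ge2 n hn) as HN.
  set (N := INR n) in *. set (w := z ^ 2) in *. set (h := hf n y z) in *.
  assert (Hw : 0 < w) by (unfold w; nra).
  assert (Hid : fy n y z + (1/3) * (2 * z * fz n y z) =
    - h * (1 - 2 * w * (N + 1) / (3 * N * (w + N))) - (2/3) * (w * (1 - w) ^ 2 / (w + N))).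
  { unfold h, w, N, hf, fy, fz. field. unfold N, w in *. split; nra. }
  rewrite Hid.
  set (A := 1 - 2 * w * (N + 1) / (3 * N * (w + N))).
  assert (HA : 1/2 <= A).
  { unfold A. assert (2 * w * (N + 1) / (3 * N * (w + N)) <= 1/2); [|lra].
    apply (Rmult_le_reg_r (3 * N * (w + N))); [nra|].
    replace (2 * w * (N + 1) / (3 * N * (w + N)) * (3 * N * (w + N))) with (2 * w * (N + 1)) by (field; nra).
    nra. }
  set (K := (1 - y0) ^ 2 / (N + 1)).
  assert (HK0 : 0 < K) by (unfold K; apply Rdiv_lt_0_compat; [apply pow_lt|]; lra).
  assert (HK1 : K <= 1/3).
  { unfold K. apply (Rmult_le_reg_r (N + 1)); [lra|].
    replace ((1 - y0) ^ 2 / (N + 1) * (N + 1)) with ((1 - y0) ^ 2) by (field; lra). nra. }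
  assert (HB : w * K <= w * (1 - w) ^ 2 / (w + N)).
  { unfold K. apply (Rmult_le_reg_r ((N + 1) * (w + N))); [nra|].
    replace (w * ((1 - y0) ^ 2 / (N + 1)) * ((N + 1) * (w + N))) with (w * (1 - y0) ^ 2 * (w + N)) by (field; lra).
    replace (w * (1 - w) ^ 2 / (w + N) * ((N + 1) * (w + N))) with (w * (1 - w) ^ 2 * (N + 1)) by (field; nra).
    assert ((1 - y0) ^ 2 <= (1 - w) ^ 2) by nra.
    assert (w + N <= N + 1) by lra.
    assert (0 <= (1 - y0) ^ 2) by nra.
    apply Rmult_le_compat; nra. }
  assert (Hyb : y <= h / 2 + 3 / 2 * w).
  { unfold h, hf in *. fold N w in Hh |- *. nra. }
  replace ((1 - y0) ^ 2 / (3 * (N + 1))) with (K / 3) by (unfold K; field; lra).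
  assert (h * (1/2) <= h * A) by (apply Rmult_le_compat_l; lra).
  assert (K * y <= K * (h / 2 + 3 / 2 * w)) by (apply Rmult_le_compat_l; lra).
  assert (K * h <= 1/3 * h) by (apply Rmult_le_compat_r; lra).
  nra.
Qed.

Lemma lim_bound (f : R -> R) : (forall eps, 0 < eps -> exists M, forall t, M < t -> Rabs (f t) < eps) ->
  is_lim f p_infty 0.
Proof.
  intros H P [eps HP]. destruct (H eps (cond_pos eps)) as [M HM].
  exists M. intros x Hx. apply HP. change (Rabs (f x - 0) < eps). rewrite Rminus_0_r. auto.
Qed.

Lemma exp_decay A c : 0 < c -> forall eps, 0 < eps -> exists M, 1 <= M /\ forall t, M < t -> A * exp (- c * t) < eps.
Proof.
  intros Hc eps He.
  set (B := Rabs A + 1). assert (HB : 0 < B) by (unfold B; pose proof (Rabs_pos A); lra).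
  exists (Rmax 1 (- ln (eps / B) / c)). split; [apply Rmax_l|].
  intros t Ht. pose proof (Rmax_r 1 (- ln (eps / B) / c)).
  assert (H1 : - ln (eps / B) < c * t).
  { apply (Rmult_lt_compat_l c) in Ht; auto.
    assert (c * (- ln (eps / B) / c) = - ln (eps / B)) by (field; lra).
    assert (c * (- ln (eps / B) / c) <= c * Rmax 1 (- ln (eps / B) / c)) by (apply Rmult_le_compat_l; lra).
    lra. }
  assert (H2 : exp (- c * t) < eps / B).
  { rewrite <- (exp_ln (eps / B)) by (apply Rdiv_lt_0_compat; lra). apply exp_increasing. lra. }
  pose proof (exp_pos (- c * t)).
  assert (A * exp (- c * t) <= Rabs A * exp (- c * t)) by (apply Rmult_le_compat_r; [lra| apply Rle_abs]).
  assert (Rabs A * exp (- c * t) < B * (eps / B)).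
  { apply (Rle_lt_trans _ (B * exp (- c * t))). apply Rmult_le_compat_r; unfold B; lra.
    apply Rmult_lt_compat_l; auto. }
  replace (B * (eps / B)) with eps in H4 by (field; lra). lra.
Qed.

Lemma convergence n (hn : (2 <= n)%nat) (y0 z0 : R) (y z : R -> R) :
  in_D n y0 z0 -> is_solution_on_pos n y z y0 z0 ->
  is_lim y p_infty 0 /\ is_lim z p_infty 0.
Proof.
  intros HD [Hy0 [Hz0 [Ly [Lz Hd]]]].
  assert (HQ : forall t, 0 <= t -> Qs n y z y0 z0 t).
  { apply invariance; auto.
    - apply RC_at_right. rewrite Hy0. exact Ly.
    - apply RC_at_right. rewrite Hz0. exact Lz.
    - intros t Ht. destruct (Hd t Ht) as [D1 D2]. exists (fy n (y t) (z t)), (fz n (y t) (z t)). auto. }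
  assert (HF : forall t, 0 <= t -> 0 < y t < 1 /\ 0 < z t < 1 /\ z t ^ 2 <= y t /\ y t <= y0 /\ 0 <= hf n (y t) (z t)).
  { intros t Ht. destruct (HQ t Ht) as [H1 [H2 H3]].
    destruct (Q_facts n hn y0 z0 (y t) (z t) t HD H1 H2 H3) as [A1 [A2 [A3 _]]]. auto. }
  destruct HD as [_ [_ [_ Hy01]]].
  set (c := (1 - y0) ^ 2 / (3 * (INR n + 1))).
  pose proof (INR_ge2 n hn).
  assert (Hc : 0 < c) by (unfold c; apply Rdiv_lt_0_compat; [apply pow_lt|]; lra).
  set (V := fun t => y t + (1/3) * z t ^ 2).
  set (W := fun t => V t * exp (c * t)).
  assert (DW : forall t, 0 < t -> exists d, is_derive W t d /\ d <= 0).
  { intros t Ht. destruct (Hd t Ht) as [D1 D2].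
    eexists. split.
    - unfold W, V. apply (der_mult (fun t => y t + (1/3) * z t ^ 2) (fun t => exp (c * t))).
      apply (der_plus y (fun t => (1/3) * z t ^ 2)). exact D1.
      apply (der_mult (fun _ => 1/3) (fun t => z t ^ 2)). apply der_const. apply der_sq. exact D2.
      apply der_exp_lin.
    - destruct (HF t) as [A1 [A2 [A3 [A4 A5]]]]; [lra|].
      pose proof (Vdot_bound n hn y0 (y t) (z t) Hy01 A1 A2 A4 A5 A3). fold c in H0.
      pose proof (exp_pos (c * t)).
      assert ((fy n (y t) (z t) + 1/3 * (2 * z t * fz n (y t) (z t)) + c * (y t + 1/3 * z t ^ 2)) * exp (c * t) <= 0).
      { apply Rmult_le_0_r; lra. }
      nra. }
  assert (HWb : forall t, 1 < t -> W t <= W 1).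
  { intros t Ht. apply (mono_down W 1 t); auto.
    destruct (DW 1 ltac:(lra)) as [d [Dd _]]. eapply RC_derive; eauto.
    intros u Hu. apply DW. lra. }
  assert (HVb : forall t, 1 < t -> V t <= W 1 * exp (- c * t)).
  { intros t Ht. specialize (HWb t Ht). unfold W at 1 in HWb.
    pose proof (exp_pos (c * t)).
    replace (V t) with (V t * exp (c * t) * exp (- c * t)).
    apply Rmult_le_compat_r; [pose proof (exp_pos (- c * t)); lra | auto].
    rewrite Rmult_assoc, <- exp_plus. replace (c * t + - c * t) with 0 by ring. rewrite exp_0. ring. }
  split; apply lim_bound; intros eps He.
  - destruct (exp_decay (W 1) c Hc eps He) as [M [HM1 HM]].
    exists M. intros t Ht. destruct (HF t) as [A1 [A2 [A3 _]]]; [lra|].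
    specialize (HVb t ltac:(lra)). specialize (HM t Ht). unfold V in HVb.
    rewrite Rabs_right by lra. nra.
  - destruct (exp_decay (3 * W 1) c Hc (eps * eps)) as [M [HM1 HM]]; [nra|].
    exists M. intros t Ht. destruct (HF t) as [A1 [A2 [A3 _]]]; [lra|].
    specialize (HVb t ltac:(lra)). specialize (HM t Ht). unfold V in HVb.
    rewrite Rabs_right by lra.
    assert (z t * z t < eps * eps) by (simpl in *; nra).
    destruct (Rlt_le_dec (z t) eps); auto. nra.
Qed.

Definition lipf (f : R -> R) (K : R) := forall s t, Rabs (f t - f s) <= K * Rabs (t - s).

Lemma lip_cont f K : lipf f K -> forall x, continuous f x.
Proof.
  intros H x P [eps HP].
  assert (HK : 0 < Rabs K + 1) by (pose proof (Rabs_pos K); lra).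
  exists (mkposreal (eps / (Rabs K + 1)) (Rdiv_lt_0_compat _ _ (cond_pos eps) HK)).
  intros u Hu. apply HP. change (Rabs (u - x) < eps / (Rabs K + 1)) in Hu.
  change (Rabs (f u - f x) < eps).
  specialize (H x u).
  assert (K * Rabs (u - x) <= Rabs K * Rabs (u - x)) by (apply Rmult_le_compat_r; [apply Rabs_pos|apply Rle_abs]).
  assert (Rabs K * Rabs (u - x) <= Rabs K * (eps / (Rabs K + 1))) by (apply Rmult_le_compat_l; [apply Rabs_pos|lra]).
  assert (Rabs K * (eps / (Rabs K + 1)) < eps).
  { apply (Rmult_lt_reg_r (Rabs K + 1)); auto.
    replace (Rabs K * (eps / (Rabs K + 1)) * (Rabs K + 1)) with (Rabs K * eps) by (field; lra).
    pose proof (cond_pos eps). nra. }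
  lra.
Qed.

Lemma lip_ex_RInt f K : lipf f K -> forall a b, ex_RInt f a b.
Proof. intros H a b. apply (@ex_RInt_continuous R_CompleteNormedModule). intros; eapply lip_cont; eauto. Qed.

Lemma lip_comp2 (F : R -> R -> R) L p q M :
  (forall u v u' v', Rabs (F u v - F u' v') <= L * (Rabs (u - u') + Rabs (v - v'))) ->
  0 <= L -> lipf p M -> lipf q M -> lipf (fun s => F (p s) (q s)) (2 * L * M).
Proof.
  intros HF HL Hp Hq s t. eapply Rle_trans. apply HF.
  specialize (Hp s t). specialize (Hq s t).
  assert (L * (Rabs (p t - p s) + Rabs (q t - q s)) <= L * (M * Rabs (t - s) + M * Rabs (t - s))).
  { apply Rmult_le_compat_l; lra. }
  lra.
Qed.

Lemma lip_minus f g K1 K2 : lipf f K1 -> lipf g K2 -> lipf (fun s => f s - g s) (K1 + K2).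
Proof.
  intros H1 H2 s t. specialize (H1 s t). specialize (H2 s t).
  replace (f t - g t - (f s - g s)) with ((f t - f s) - (g t - g s)) by ring.
  eapply Rle_trans. apply Rabs_triang. rewrite Rabs_Ropp. lra.
Qed.

Lemma lip_abs f K : lipf f K -> lipf (fun s => Rabs (f s)) K.
Proof.
  intros H s t. eapply Rle_trans; [|apply H].
  apply Rabs_le. pose proof (Rabs_triang_inv (f t) (f s)). pose proof (Rabs_triang_inv (f s) (f t)).
  replace (f s - f t) with (- (f t - f s)) in H1 by ring. rewrite Rabs_Ropp in H1. lra.
Qed.

Lemma lip_const c : lipf (fun _ => c) 0.
Proof. intros s t. rewrite Rminus_eq_0, Rabs_R0. lra. Qed.

Lemma RInt_chasles0 (g : R -> R) K s t : lipf g K ->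
  RInt g 0 t - RInt g 0 s = RInt g s t.
Proof.
  intros H. pose proof (RInt_Chasles g 0 s t (lip_ex_RInt g K H 0 s) (lip_ex_RInt g K H s t)).
  change (RInt g 0 s + RInt g s t = RInt g 0 t) in H0. lra.
Qed.

Lemma RInt_bound (g : R -> R) K M s t : lipf g K -> (forall u, Rabs (g u) <= M) ->
  Rabs (RInt g s t) <= M * Rabs (t - s).
Proof.
  intros H HM. destruct (Rle_lt_dec s t) as [Hst|Hst].
  - rewrite (Rabs_right (t - s)) by lra. rewrite Rmult_comm. apply abs_RInt_le_const; auto.
    eapply lip_ex_RInt; eauto.
  - rewrite <- (opp_RInt_swap g t s) by (eapply lip_ex_RInt; eauto).
    change (Rabs (- RInt g t s) <= M * Rabs (t - s)). rewrite Rabs_Ropp.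
    rewrite (Rabs_left (t - s)) by lra. replace (- (t - s)) with (s - t) by ring.
    rewrite Rmult_comm. apply abs_RInt_le_const; [lra| |auto]. eapply lip_ex_RInt; eauto.
Qed.

Lemma lip_RInt (g : R -> R) K M c : lipf g K -> (forall u, Rabs (g u) <= M) ->
  lipf (fun t => c + RInt g 0 t) M.
Proof.
  intros H HM s t. replace (c + RInt g 0 t - (c + RInt g 0 s)) with (RInt g 0 t - RInt g 0 s) by ring.
  rewrite (RInt_chasles0 g K s t H). eapply RInt_bound; eauto.
Qed.

Lemma is_RInt_exp (B lam t : R) : 0 < lam ->
  is_RInt (fun s => B * exp (lam * s)) 0 t (B * (exp (lam * t) - 1) / lam).
Proof.
  intros Hl.
  replace (B * (exp (lam * t) - 1) / lam) with
    (minus ((fun s => B * exp (lam * s) / lam) t) ((fun s => B * exp (lam * s) / lam) 0)).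
  2:{ unfold minus, plus, opp; simpl. rewrite Rmult_0_r, exp_0. field. lra. }
  apply (@is_RInt_derive R_CompleteNormedModule (fun s => B * exp (lam * s) / lam)).
  - intros x _. auto_derive; auto. field. lra.
  - intros x _. apply continuity_pt_filterlim.
    apply derivable_continuous_pt. apply derivable_pt_scal.
    apply (derivable_pt_comp (fun s => lam * s) exp). apply derivable_pt_scal, derivable_pt_id. apply derivable_pt_exp.
Qed.

Lemma lim_le_bound (u : nat -> R) (l a B : R) k : is_lim_seq u l ->
  (forall m, (k <= m)%nat -> Rabs (u m - a) <= B) -> Rabs (l - a) <= B.
Proof.
  intros Hl Hb. destruct (Rle_lt_dec (Rabs (l - a)) B) as [|Hlt]; auto. exfalso.
  apply is_lim_seq_spec in Hl.
  destruct (Hl (mkposreal (Rabs (l - a) - B) ltac:(lra))) as [N HN].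
  specialize (HN (Nat.max N k) (Nat.le_max_l _ _)). simpl in HN.
  specialize (Hb (Nat.max N k) (Nat.le_max_r _ _)).
  pose proof (Rabs_triang (u (Nat.max N k) - a) (l - u (Nat.max N k))).
  replace (u (Nat.max N k) - a + (l - u (Nat.max N k))) with (l - a) in H by ring.
  replace (l - u (Nat.max N k)) with (- (u (Nat.max N k) - l)) in H by ring. rewrite Rabs_Ropp in H. lra.
Qed.

Lemma half_pow_small K eps : 0 < eps -> exists N, K / 2 ^ N < eps.
Proof.
  intros He. destruct (pow_lt_1_zero (/2) ltac:(rewrite Rabs_right; lra) (eps / (Rabs K + 1))) as [N HN].
  { apply Rdiv_lt_0_compat; auto. pose proof (Rabs_pos K); lra. }
  exists N. specialize (HN N (Nat.le_refl N)).
  rewrite <- Rinv_pow in HN. rewrite Rabs_right in HN by (left; apply Rinv_0_lt_compat, pow_lt; lra).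
  assert (Hp : 0 < 2 ^ N) by (apply pow_lt; lra).
  assert (HK : 0 < Rabs K + 1) by (pose proof (Rabs_pos K); lra).
  unfold Rdiv. apply (Rle_lt_trans _ (Rabs K * / 2 ^ N)).
  apply Rmult_le_compat_r; [left; apply Rinv_0_lt_compat; auto| apply Rle_abs].
  apply (Rle_lt_trans _ ((Rabs K + 1) * / 2 ^ N)).
  apply Rmult_le_compat_r; [left; apply Rinv_0_lt_compat; auto| lra].
  apply (Rmult_lt_compat_l (Rabs K + 1)) in HN; auto.
  replace ((Rabs K + 1) * (eps / (Rabs K + 1))) with eps in HN by (field; lra). exact HN. lra.
Qed.

Definition Lip2 (F : R -> R -> R) (L : R) :=
  forall u v u' v', Rabs (F u v - F u' v') <= L * (Rabs (u - u') + Rabs (v - v')).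

Lemma step_comp (F : R -> R -> R) L p q p' q' K B lam t :
  Lip2 F L -> 0 <= L -> lipf p K -> lipf q K -> lipf p' K -> lipf q' K ->
  0 < lam -> 0 <= B -> 0 <= t ->
  (forall s, 0 <= s <= t -> Rabs (p' s - p s) + Rabs (q' s - q s) <= B * exp (lam * s)) ->
  Rabs (RInt (fun s => F (p' s) (q' s)) 0 t - RInt (fun s => F (p s) (q s)) 0 t)
    <= L * B * exp (lam * t) / lam.
Proof.
  intros HF HL Hp Hq Hp' Hq' Hlam HB Ht Hb.
  set (g' := fun s => F (p' s) (q' s)). set (g := fun s => F (p s) (q s)).
  assert (Lg' : lipf g' (2 * L * K)) by (apply lip_comp2; auto).
  assert (Lg : lipf g (2 * L * K)) by (apply lip_comp2; auto).
  assert (Lh : lipf (fun s => g' s - g s) (2 * L * K + 2 * L * K)) by (apply lip_minus; auto).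
  assert (E1 : RInt g' 0 t - RInt g 0 t = RInt (fun s => g' s - g s) 0 t).
  { transitivity (minus (RInt g' 0 t) (RInt g 0 t)). reflexivity.
    rewrite <- (RInt_minus g' g 0 t). reflexivity. eapply lip_ex_RInt; eauto. eapply lip_ex_RInt; eauto. }
  rewrite E1.
  eapply Rle_trans. apply abs_RInt_le; auto. eapply lip_ex_RInt; eauto.
  eapply Rle_trans. apply (RInt_le _ (fun s => (L * B) * exp (lam * s))); auto.
  - eapply lip_ex_RInt. apply lip_abs. eauto.
  - eexists. apply is_RInt_exp; auto.
  - intros x Hx. unfold g', g. eapply Rle_trans. apply HF.
    rewrite Rmult_assoc. apply Rmult_le_compat_l; auto. apply Hb. lra.
  - rewrite (is_RInt_unique _ _ _ _ (is_RInt_exp (L * B) lam t Hlam)).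
    assert (0 <= L * B) by (apply Rmult_le_pos; auto).
    unfold Rdiv. apply Rmult_le_compat_r. left; apply Rinv_0_lt_compat; auto.
    nra.
Qed.

Fixpoint pic (F1 F2 : R -> R -> R) (a0 b0 : R) (k : nat) : (R -> R) * (R -> R) :=
  match k with
  | O => (fun _ => a0, fun _ => b0)
  | S k => let pq := pic F1 F2 a0 b0 k in
      (fun t => a0 + RInt (fun s => F1 (fst pq s) (snd pq s)) 0 t,
       fun t => b0 + RInt (fun s => F2 (fst pq s) (snd pq s)) 0 t)
  end.

Lemma aux1 (a b : R) : a + b - a = b. Proof. ring. Qed.
Lemma aux2 (a b c : R) : a + b - (a + c) = b - c. Proof. ring. Qed.

Lemma aux3 (x a I J : R) : x - (a + I) + (I - J) = x - (a + J). Proof. ring. Qed.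

Lemma Rmax_lip s t : Rabs (Rmax 0 t - Rmax 0 s) <= Rabs (t - s).
Proof.
  unfold Rmax. destruct (Rle_dec 0 t); destruct (Rle_dec 0 s); apply Rabs_le;
  pose proof (Rabs_pos (t - s)); pose proof (Rle_abs (t - s));
  pose proof (Rle_abs (- (t - s))); rewrite Rabs_Ropp in *; lra.
Qed.

Lemma picard (F1 F2 : R -> R -> R) (M L a0 b0 : R) :
  0 < L -> 0 <= M ->
  (forall u v, Rabs (F1 u v) <= M) -> (forall u v, Rabs (F2 u v) <= M) ->
  Lip2 F1 L -> Lip2 F2 L ->
  exists x1 x2 : R -> R, x1 0 = a0 /\ x2 0 = b0 /\
    (forall t, continuous x1 t) /\ (forall t, continuous x2 t) /\
    (forall t, 0 < t -> is_derive x1 t (F1 (x1 t) (x2 t)) /\ is_derive x2 t (F2 (x1 t) (x2 t))).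
Proof.
  intros HL HM HB1 HB2 HL1 HL2.
  set (P := pic F1 F2 a0 b0).
  assert (Hlip : forall k, lipf (fst (P k)) M /\ lipf (snd (P k)) M).
  { induction k as [|k [IH1 IH2]]; simpl.
    - split; intros s t; rewrite Rminus_eq_0, Rabs_R0; pose proof (Rabs_pos (t - s)); nra.
    - split; eapply lip_RInt; try (apply lip_comp2; eauto; lra); auto. }
  assert (HG1 : forall k, lipf (fun s => F1 (fst (P k) s) (snd (P k) s)) (2 * L * M)).
  { intro k; apply lip_comp2; auto; try lra; apply Hlip. }
  assert (HG2 : forall k, lipf (fun s => F2 (fst (P k) s) (snd (P k) s)) (2 * L * M)).
  { intro k; apply lip_comp2; auto; try lra; apply Hlip. }
  assert (H0 : forall k, fst (P k) 0 = a0 /\ snd (P k) 0 = b0).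
  { intros [|k]; simpl; auto. rewrite !RInt_point. split; apply Rplus_0_r. }
  set (lam := 4 * L). set (C := M / (2 * L)).
  assert (Hlam : 0 < lam) by (unfold lam; lra).
  assert (HC : 0 <= C) by (unfold C; apply Rdiv_le_0_compat; lra).
  assert (Hdiff : forall k t, 0 <= t ->
    Rabs (fst (P (S k)) t - fst (P k) t) + Rabs (snd (P (S k)) t - snd (P k) t) <= C * exp (lam * t) / 2 ^ k).
  { induction k as [|k IH]; intros t Ht.
    - change (Rabs (a0 + RInt (fun _ => F1 a0 b0) 0 t - a0) + Rabs (b0 + RInt (fun _ => F2 a0 b0) 0 t - b0)
         <= C * exp (lam * t) / 2 ^ 0).
      rewrite !aux1.
      pose proof (RInt_bound (fun _ => F1 a0 b0) 0 M 0 t (lip_const _) (fun _ => HB1 a0 b0)).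
      pose proof (RInt_bound (fun _ => F2 a0 b0) 0 M 0 t (lip_const _) (fun _ => HB2 a0 b0)).
      rewrite Rminus_0_r, (Rabs_right t) in H, H1 by lra.
      pose proof (exp_ineq1_le (lam * t)).
      simpl. rewrite Rdiv_1_r.
      assert (2 * M * t = C * (lam * t)) by (unfold C, lam; field; lra).
      assert (C * (lam * t) <= C * exp (lam * t)) by (apply Rmult_le_compat_l; lra).
      lra.
    - change (Rabs ((a0 + RInt (fun s => F1 (fst (P (S k)) s) (snd (P (S k)) s)) 0 t) -
                    (a0 + RInt (fun s => F1 (fst (P k) s) (snd (P k) s)) 0 t)) +
              Rabs ((b0 + RInt (fun s => F2 (fst (P (S k)) s) (snd (P (S k)) s)) 0 t) -
                    (b0 + RInt (fun s => F2 (fst (P k) s) (snd (P k) s)) 0 t))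
              <= C * exp (lam * t) / 2 ^ S k).
      assert (Hb : forall s, 0 <= s <= t -> Rabs (fst (P (S k)) s - fst (P k) s) + Rabs (snd (P (S k)) s - snd (P k) s)
                  <= (C / 2 ^ k) * exp (lam * s)).
      { intros s Hs. eapply Rle_trans. apply IH. lra. right; field. apply pow_nonzero; lra. }
      assert (HCk : 0 <= C / 2 ^ k) by (apply Rdiv_le_0_compat; auto; apply pow_lt; lra).
      pose proof (step_comp F1 L (fst (P k)) (snd (P k)) (fst (P (S k))) (snd (P (S k))) M (C / 2 ^ k) lam t
                    HL1 ltac:(lra) (proj1 (Hlip k)) (proj2 (Hlip k)) (proj1 (Hlip (S k))) (proj2 (Hlip (S k))) Hlam HCk Ht Hb).
      pose proof (step_comp F2 L (fst (P k)) (snd (P k)) (fst (P (S k))) (snd (P (S k))) M (C / 2 ^ k) lam t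
                    HL2 ltac:(lra) (proj1 (Hlip k)) (proj2 (Hlip k)) (proj1 (Hlip (S k))) (proj2 (Hlip (S k))) Hlam HCk Ht Hb).
      rewrite !aux2.
      replace (C * exp (lam * t) / 2 ^ S k) with (L * (C / 2 ^ k) * exp (lam * t) / lam + L * (C / 2 ^ k) * exp (lam * t) / lam).
      lra. unfold lam. simpl. field. split; [apply pow_nonzero|]; lra. }
  assert (Hcum : forall k m t, 0 <= t ->
    Rabs (fst (P (k + m)%nat) t - fst (P k) t) + Rabs (snd (P (k + m)%nat) t - snd (P k) t)
      <= 2 * C * exp (lam * t) / 2 ^ k - 2 * C * exp (lam * t) / 2 ^ (k + m)).
  { intros k m t Ht. induction m as [|m IH].
    - rewrite Nat.add_0_r, !Rminus_eq_0, Rabs_R0. lra.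
    - rewrite Nat.add_succ_r. pose proof (Hdiff (k + m)%nat t Ht).
      pose proof (Rabs_triang (fst (P (S (k + m))) t - fst (P (k + m)%nat) t) (fst (P (k + m)%nat) t - fst (P k) t)).
      pose proof (Rabs_triang (snd (P (S (k + m))) t - snd (P (k + m)%nat) t) (snd (P (k + m)%nat) t - snd (P k) t)).
      replace (fst (P (S (k + m))) t - fst (P (k + m)%nat) t + (fst (P (k + m)%nat) t - fst (P k) t))
        with (fst (P (S (k + m))) t - fst (P k) t) in H1 by ring.
      replace (snd (P (S (k + m))) t - snd (P (k + m)%nat) t + (snd (P (k + m)%nat) t - snd (P k) t))
        with (snd (P (S (k + m))) t - snd (P k) t) in H2 by ring.
      assert (E : 2 * C * exp (lam * t) / 2 ^ (k + m) - 2 * C * exp (lam * t) / 2 ^ S (k + m)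
                  = C * exp (lam * t) / 2 ^ (k + m)).
      { simpl. field. apply pow_nonzero. lra. }
      lra. }
  assert (Hcum' : forall k m t, 0 <= t -> (k <= m)%nat ->
    Rabs (fst (P m) t - fst (P k) t) <= 2 * C * exp (lam * t) / 2 ^ k /\ Rabs (snd (P m) t - snd (P k) t) <= 2 * C * exp (lam * t) / 2 ^ k).
  { intros k m t Ht Hkm. replace m with (k + (m - k))%nat by lia.
    pose proof (Hcum k (m - k)%nat t Ht).
    assert (0 <= 2 * C * exp (lam * t) / 2 ^ (k + (m - k))).
    { apply Rdiv_le_0_compat. pose proof (exp_pos (lam * t)). nra. apply pow_lt; lra. }
    pose proof (Rabs_pos (fst (P (k + (m - k))%nat) t - fst (P k) t)).
    pose proof (Rabs_pos (snd (P (k + (m - k))%nat) t - snd (P k) t)).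
    split; lra. }
  assert (Hcauchy : forall t, 0 <= t -> ex_finite_lim_seq (fun k => fst (P k) t) /\ ex_finite_lim_seq (fun k => snd (P k) t)).
  { intros t Ht. split; apply ex_lim_seq_cauchy_corr; intros eps;
    destruct (half_pow_small (4 * C * exp (lam * t)) eps (cond_pos eps)) as [N HN];
    exists N; intros n m Hn Hm;
    destruct (Hcum' N n t Ht Hn) as [A1 A2]; destruct (Hcum' N m t Ht Hm) as [B1 B2].
    - pose proof (Rabs_triang (fst (P n) t - fst (P N) t) (- (fst (P m) t - fst (P N) t))).
      rewrite Rabs_Ropp in H. replace (fst (P n) t - fst (P N) t + - (fst (P m) t - fst (P N) t)) with (fst (P n) t - fst (P m) t) in H by ring.
      assert (4 * C * exp (lam * t) / 2 ^ N = 2 * C * exp (lam * t) / 2 ^ N + 2 * C * exp (lam * t) / 2 ^ N) by (field; apply pow_nonzero; lra).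
      lra.
    - pose proof (Rabs_triang (snd (P n) t - snd (P N) t) (- (snd (P m) t - snd (P N) t))).
      rewrite Rabs_Ropp in H. replace (snd (P n) t - snd (P N) t + - (snd (P m) t - snd (P N) t)) with (snd (P n) t - snd (P m) t) in H by ring.
      assert (4 * C * exp (lam * t) / 2 ^ N = 2 * C * exp (lam * t) / 2 ^ N + 2 * C * exp (lam * t) / 2 ^ N) by (field; apply pow_nonzero; lra).
      lra. }
  set (x1 := fun t => real (Lim_seq (fun k => fst (P k) (Rmax 0 t)))).
  set (x2 := fun t => real (Lim_seq (fun k => snd (P k) (Rmax 0 t)))).
  assert (Hlim : forall t, is_lim_seq (fun k => fst (P k) (Rmax 0 t)) (x1 t) /\ is_lim_seq (fun k => snd (P k) (Rmax 0 t)) (x2 t)).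
  { intros t. destruct (Hcauchy (Rmax 0 t) (Rmax_l 0 t)) as [E1 E2].
    destruct E1 as [l1 E1]. destruct E2 as [l2 E2].
    unfold x1, x2. rewrite (is_lim_seq_unique _ _ E1), (is_lim_seq_unique _ _ E2). simpl. auto. }
  assert (Hbd : forall t k, 0 <= t -> Rabs (x1 t - fst (P k) t) <= 2 * C * exp (lam * t) / 2 ^ k /\ Rabs (x2 t - snd (P k) t) <= 2 * C * exp (lam * t) / 2 ^ k).
  { intros t k Ht. destruct (Hlim t) as [E1 E2]. rewrite Rmax_right in E1, E2 by lra.
    split; eapply lim_le_bound; eauto; intros m Hm; apply (Hcum' k m t Ht Hm). }
  assert (Hlx : lipf x1 M /\ lipf x2 M).
  { split; intros s t.
    - destruct (Hlim t) as [Et _]. destruct (Hlim s) as [Es _].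
      pose proof (is_lim_seq_minus' _ _ _ _ Et Es) as E.
      pose proof (lim_le_bound _ _ 0 (M * Rabs (t - s)) 0 E) as B.
      rewrite Rminus_0_r in B. apply B. intros m _. rewrite Rminus_0_r.
      eapply Rle_trans. apply (proj1 (Hlip m)). apply Rmult_le_compat_l; auto. apply Rmax_lip.
    - destruct (Hlim t) as [_ Et]. destruct (Hlim s) as [_ Es].
      pose proof (is_lim_seq_minus' _ _ _ _ Et Es) as E.
      pose proof (lim_le_bound _ _ 0 (M * Rabs (t - s)) 0 E) as B.
      rewrite Rminus_0_r in B. apply B. intros m _. rewrite Rminus_0_r.
      eapply Rle_trans. apply (proj2 (Hlip m)). apply Rmult_le_compat_l; auto. apply Rmax_lip. }
  destruct Hlx as [Lx1 Lx2].
  assert (LG1 : lipf (fun s => F1 (x1 s) (x2 s)) (2 * L * M)) by (apply lip_comp2; auto; lra).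
  assert (LG2 : lipf (fun s => F2 (x1 s) (x2 s)) (2 * L * M)) by (apply lip_comp2; auto; lra).
  assert (Hzero : forall d K, (forall k, Rabs d <= K / 2 ^ k) -> d = 0).
  { intros d K Hk. destruct (Req_dec d 0) as [|Hne]; auto. exfalso.
    destruct (half_pow_small K (Rabs d)) as [N HN]. apply Rabs_pos_lt; auto.
    specialize (Hk N). lra. }
  assert (Hbk : forall k s, 0 <= s -> Rabs (fst (P k) s - x1 s) + Rabs (snd (P k) s - x2 s) <= (4 * C / 2 ^ k) * exp (lam * s)).
  { intros k s Hs. destruct (Hbd s k Hs) as [A1 A2]. rewrite (Rabs_minus_sym (fst (P k) s)), (Rabs_minus_sym (snd (P k) s)).
    replace (4 * C / 2 ^ k * exp (lam * s)) with (2 * C * exp (lam * s) / 2 ^ k + 2 * C * exp (lam * s) / 2 ^ k).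
    lra. field. apply pow_nonzero; lra. }
  assert (HCk : forall k, 0 <= 4 * C / 2 ^ k) by (intro k; apply Rdiv_le_0_compat; [lra|apply pow_lt; lra]).
  assert (Hint : forall t, 0 <= t -> x1 t = a0 + RInt (fun s => F1 (x1 s) (x2 s)) 0 t /\
                                     x2 t = b0 + RInt (fun s => F2 (x1 s) (x2 s)) 0 t).
  { intros t Ht. split.
    - assert (x1 t - (a0 + RInt (fun s => F1 (x1 s) (x2 s)) 0 t) = 0); [|lra].
      apply (Hzero _ (2 * C * exp (lam * t))). intro k.
      pose proof (proj1 (Hbd t (S k) Ht)).
      pose proof (step_comp F1 L x1 x2 (fst (P k)) (snd (P k)) M (4 * C / 2 ^ k) lam t HL1 ltac:(lra)
                    Lx1 Lx2 (proj1 (Hlip k)) (proj2 (Hlip k)) Hlam (HCk k) Ht (fun s Hs => Hbk k s (proj1 Hs))).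
      change (fst (P (S k)) t) with (a0 + RInt (fun s => F1 (fst (P k) s) (snd (P k) s)) 0 t) in H.
      pose proof (Rabs_triang (x1 t - (a0 + RInt (fun s => F1 (fst (P k) s) (snd (P k) s)) 0 t))
                   (RInt (fun s => F1 (fst (P k) s) (snd (P k) s)) 0 t - RInt (fun s => F1 (x1 s) (x2 s)) 0 t)).
      rewrite aux3 in H2.
      assert (E1 : 2 * C * exp (lam * t) / 2 ^ S k = C * exp (lam * t) / 2 ^ k) by (simpl; field; apply pow_nonzero; lra).
      assert (E2 : L * (4 * C / 2 ^ k) * exp (lam * t) / lam = C * exp (lam * t) / 2 ^ k) by (unfold lam; field; split; [apply pow_nonzero|]; lra).
      assert (E3 : 2 * C * exp (lam * t) / 2 ^ k = C * exp (lam * t) / 2 ^ k + C * exp (lam * t) / 2 ^ k) by (field; apply pow_nonzero; lra).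
      lra.
    - assert (x2 t - (b0 + RInt (fun s => F2 (x1 s) (x2 s)) 0 t) = 0); [|lra].
      apply (Hzero _ (2 * C * exp (lam * t))). intro k.
      pose proof (proj2 (Hbd t (S k) Ht)).
      pose proof (step_comp F2 L x1 x2 (fst (P k)) (snd (P k)) M (4 * C / 2 ^ k) lam t HL2 ltac:(lra)
                    Lx1 Lx2 (proj1 (Hlip k)) (proj2 (Hlip k)) Hlam (HCk k) Ht (fun s Hs => Hbk k s (proj1 Hs))).
      change (snd (P (S k)) t) with (b0 + RInt (fun s => F2 (fst (P k) s) (snd (P k) s)) 0 t) in H.
      pose proof (Rabs_triang (x2 t - (b0 + RInt (fun s => F2 (fst (P k) s) (snd (P k) s)) 0 t))
                   (RInt (fun s => F2 (fst (P k) s) (snd (P k) s)) 0 t - RInt (fun s => F2 (x1 s) (x2 s)) 0 t)).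
      rewrite aux3 in H2.
      assert (E1 : 2 * C * exp (lam * t) / 2 ^ S k = C * exp (lam * t) / 2 ^ k) by (simpl; field; apply pow_nonzero; lra).
      assert (E2 : L * (4 * C / 2 ^ k) * exp (lam * t) / lam = C * exp (lam * t) / 2 ^ k) by (unfold lam; field; split; [apply pow_nonzero|]; lra).
      assert (E3 : 2 * C * exp (lam * t) / 2 ^ k = C * exp (lam * t) / 2 ^ k + C * exp (lam * t) / 2 ^ k) by (field; apply pow_nonzero; lra).
      lra. }
  exists x1, x2. split; [|split; [|split; [|split]]].
  - rewrite (proj1 (Hint 0 (Rle_refl 0))), RInt_point. apply Rplus_0_r.
  - rewrite (proj2 (Hint 0 (Rle_refl 0))), RInt_point. apply Rplus_0_r.
  - apply (lip_cont x1 M Lx1).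
  - apply (lip_cont x2 M Lx2).
  - intros t Ht. split.
    + apply (is_derive_ext_loc (fun u => a0 + RInt (fun s => F1 (x1 s) (x2 s)) 0 u)).
      * exists (mkposreal t Ht). intros u Hu. change (Rabs (u - t) < t) in Hu.
        symmetry. apply Hint. apply Rabs_def2 in Hu. lra.
      * rewrite <- (Rplus_0_l (F1 (x1 t) (x2 t))).
        apply (is_derive_plus (fun _ => a0) (RInt (fun s => F1 (x1 s) (x2 s)) 0)). exact (@is_derive_const R_AbsRing R_NormedModule _ t).
        apply (is_derive_RInt (fun s => F1 (x1 s) (x2 s)) (RInt (fun s => F1 (x1 s) (x2 s)) 0) 0 t).
        apply filter_forall. intros u. apply (@RInt_correct R_CompleteNormedModule). eapply lip_ex_RInt; eauto.
        eapply lip_cont; eauto.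
    + apply (is_derive_ext_loc (fun u => b0 + RInt (fun s => F2 (x1 s) (x2 s)) 0 u)).
      * exists (mkposreal t Ht). intros u Hu. change (Rabs (u - t) < t) in Hu.
        symmetry. apply Hint. apply Rabs_def2 in Hu. lra.
      * rewrite <- (Rplus_0_l (F2 (x1 t) (x2 t))).
        apply (is_derive_plus (fun _ => b0) (RInt (fun s => F2 (x1 s) (x2 s)) 0)). exact (@is_derive_const R_AbsRing R_NormedModule _ t).
        apply (is_derive_RInt (fun s => F2 (x1 s) (x2 s)) (RInt (fun s => F2 (x1 s) (x2 s)) 0) 0 t).
        apply filter_forall. intros u. apply (@RInt_correct R_CompleteNormedModule). eapply lip_ex_RInt; eauto.
        eapply lip_cont; eauto.
Qed.

Definition clamp (x : R) : R := Rmax 0 (Rmin 1 x).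

Lemma clamp_bounds x : 0 <= clamp x <= 1.
Proof. unfold clamp. split. apply Rmax_l. apply Rmax_lub; [lra| apply Rmin_l]. Qed.

Lemma clamp_id x : 0 <= x <= 1 -> clamp x = x.
Proof. intros H. unfold clamp. rewrite Rmin_right by lra. rewrite Rmax_right by lra. reflexivity. Qed.

Lemma clamp_lip x y : Rabs (clamp x - clamp y) <= Rabs (x - y).
Proof.
  unfold clamp, Rmax, Rmin. apply Rabs_le.
  pose proof (Rle_abs (x - y)). pose proof (Rle_abs (- (x - y))). rewrite Rabs_Ropp in *.
  destruct (Rle_dec 1 x); destruct (Rle_dec 1 y);
  repeat match goal with |- context [Rle_dec ?a ?b] => destruct (Rle_dec a b) end;
  repeat match goal with H : ~ (_ <= _) |- _ => apply Rnot_le_lt in H end; split; lra.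
Qed.

Lemma lip_lin (d P Q L a a' b b' : R) : d = (a - a') * P + (b - b') * Q -> Rabs P <= L -> Rabs Q <= L ->
  Rabs d <= L * (Rabs (a - a') + Rabs (b - b')).
Proof.
  intros -> HP HQ. eapply Rle_trans. apply Rabs_triang. rewrite !Rabs_mult.
  pose proof (Rabs_pos (a - a')). pose proof (Rabs_pos (b - b')).
  assert (Rabs (a - a') * Rabs P <= Rabs (a - a') * L) by (apply Rmult_le_compat_l; auto).
  assert (Rabs (b - b') * Rabs Q <= Rabs (b - b') * L) by (apply Rmult_le_compat_l; auto).
  lra.
Qed.


Definition Ft1 (n : nat) u v := fy n (clamp u) (clamp v).
Definition Ft2 (n : nat) u v := fz n (clamp u) (clamp v).

Lemma fy_bound (n : nat) (hn : (2 <= n)%nat) a b : 0 <= a <= 1 -> 0 <= b <= 1 -> Rabs (fy n a b) <= 2 * INR n + 5.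
Proof.
  intros Ha Hb. pose proof (INR_ge2 n hn). unfold fy. apply Rabs_le.
  assert (0 <= b ^ 2 <= 1) by (simpl; nra). split; nra.
Qed.

Lemma fz_bound (n : nat) (hn : (2 <= n)%nat) a b : 0 <= a <= 1 -> 0 <= b <= 1 -> Rabs (fz n a b) <= 2 * INR n + 5.
Proof.
  intros Ha Hb. pose proof (INR_ge2 n hn).
  replace (fz n a b) with ((INR n + 1) / INR n * a * b - b / INR n - b ^ 3) by (unfold fz; field; lra).
  assert (0 <= (INR n + 1) / INR n <= 2).
  { split. apply Rdiv_le_0_compat; lra. apply (Rmult_le_reg_r (INR n)); [lra|].
    replace ((INR n + 1) / INR n * INR n) with (INR n + 1) by (field; lra). lra. }
  assert (0 <= b / INR n <= 1).
  { split. apply Rdiv_le_0_compat; lra. apply (Rmult_le_reg_r (INR n)); [lra|].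
    replace (b / INR n * INR n) with b by (field; lra). lra. }
  assert (0 <= b ^ 3 <= 1) by (simpl; split; nra).
  assert (0 <= (INR n + 1) / INR n * a * b <= 2).
  { split. apply Rmult_le_pos; [apply Rmult_le_pos|]; lra.
    assert ((INR n + 1) / INR n * a * b <= 2 * 1 * 1); [|lra].
    repeat apply Rmult_le_compat; try lra. apply Rmult_le_pos; lra. }
  apply Rabs_le. split; lra.
Qed.

Lemma fy_lip (n : nat) (hn : (2 <= n)%nat) a b a' b' : 0 <= a <= 1 -> 0 <= b <= 1 -> 0 <= a' <= 1 -> 0 <= b' <= 1 ->
  Rabs (fy n a b - fy n a' b') <= (2 * INR n + 8) * (Rabs (a - a') + Rabs (b - b')).
Proof.
  intros Ha Hb Ha' Hb'. pose proof (INR_ge2 n hn).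
  apply (lip_lin _ (- (b ^ 2 + INR n)) ((b + b') * (INR n + 1 - a'))).
  - unfold fy. ring.
  - apply Rabs_le. simpl. split; nra.
  - apply Rabs_le. split; nra.
Qed.

Lemma fz_lip (n : nat) (hn : (2 <= n)%nat) a b a' b' : 0 <= a <= 1 -> 0 <= b <= 1 -> 0 <= a' <= 1 -> 0 <= b' <= 1 ->
  Rabs (fz n a b - fz n a' b') <= (2 * INR n + 8) * (Rabs (a - a') + Rabs (b - b')).
Proof.
  intros Ha Hb Ha' Hb'. pose proof (INR_ge2 n hn).
  assert (HN1 : 0 <= (INR n + 1) / INR n <= 2).
  { split. apply Rdiv_le_0_compat; lra. apply (Rmult_le_reg_r (INR n)); [lra|].
    replace ((INR n + 1) / INR n * INR n) with (INR n + 1) by (field; lra). lra. }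
  apply (lip_lin _ ((INR n + 1) / INR n * b) ((INR n + 1) / INR n * (INR n - 1 + a') - INR n - (b ^ 2 + b * b' + b' ^ 2))).
  - unfold fz. field. lra.
  - apply Rabs_le. split; nra.
  - replace ((INR n + 1) / INR n * (INR n - 1 + a') - INR n) with (((INR n + 1) * a' - 1) / INR n) by (field; lra).
    assert (-1 <= ((INR n + 1) * a' - 1) / INR n <= 2).
    { split; apply (Rmult_le_reg_r (INR n)); try lra;
      replace (((INR n + 1) * a' - 1) / INR n * INR n) with ((INR n + 1) * a' - 1) by (field; lra); nra. }
    apply Rabs_le. simpl. split; nra.
Qed.

Lemma Ft_props (n : nat) (hn : (2 <= n)%nat) : (forall u v, Rabs (Ft1 n u v) <= 2 * INR n + 5) /\ (forall u v, Rabs (Ft2 n u v) <= 2 * INR n + 5) /\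
  Lip2 (Ft1 n) (2 * INR n + 8) /\ Lip2 (Ft2 n) (2 * INR n + 8).
Proof.
  pose proof (INR_ge2 n hn).
  split; [|split; [|split]].
  - intros u v. apply (fy_bound n hn); apply clamp_bounds.
  - intros u v. apply (fz_bound n hn); apply clamp_bounds.
  - intros u v u' v'. eapply Rle_trans. apply (fy_lip n hn); apply clamp_bounds.
    apply Rmult_le_compat_l; [lra|]. pose proof (clamp_lip u u'). pose proof (clamp_lip v v'). lra.
  - intros u v u' v'. eapply Rle_trans. apply (fz_lip n hn); apply clamp_bounds.
    apply Rmult_le_compat_l; [lra|]. pose proof (clamp_lip u u'). pose proof (clamp_lip v v'). lra.
Qed.


Lemma cont_at_right (f : R -> R) a : continuous f a -> filterlim f (at_right a) (locally (f a)).
Proof.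
  intros Hc P HP. specialize (Hc P HP). unfold at_right, within, filtermap.
  apply (filter_imp (fun x => P (f x))); auto.
Qed.

Theorem theorem3p5 (n : nat) (hn : (2 <= n)%nat) (y0 z0 : R) :
  in_D n y0 z0 ->
  (exists y z : R -> R, is_solution_on_pos n y z y0 z0) /\
  (forall y z : R -> R, is_solution_on_pos n y z y0 z0 ->
     is_lim y p_infty 0 /\ is_lim z p_infty 0).
Proof.
  intros HD. split.
  - pose proof (INR_ge2 n hn).
    destruct (Ft_props n hn) as [B1 [B2 [L1 L2]]].
    destruct (picard (Ft1 n) (Ft2 n) (2 * INR n + 5) (2 * INR n + 8) y0 z0 ltac:(lra) ltac:(lra) B1 B2 L1 L2)
      as [x1 [x2 [H1 [H2 [C1 [C2 Hd]]]]]].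
    assert (Hd' : forall t, 0 < t -> exists dy dz : R, is_derive x1 t dy /\ is_derive x2 t dz /\
      (0 < x1 t < 1 -> 0 < x2 t < 1 -> dy = fy n (x1 t) (x2 t) /\ dz = fz n (x1 t) (x2 t))).
    { intros t Ht. destruct (Hd t Ht) as [D1 D2]. exists (Ft1 n (x1 t) (x2 t)), (Ft2 n (x1 t) (x2 t)).
      split; auto. split; auto. intros Hb1 Hb2. unfold Ft1, Ft2. rewrite !clamp_id by lra. auto. }
    assert (HQ := invariance n hn x1 x2 y0 z0 HD H1 H2 (RC_cont _ _ (C1 0)) (RC_cont _ _ (C2 0)) Hd').
    exists x1, x2. split; [auto|split; [auto|split; [|split; [|]]]].
    + rewrite <- H1. apply cont_at_right; auto.
    + rewrite <- H2. apply cont_at_right; auto.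
    + intros t Ht. destruct (HQ t ltac:(lra)) as [Q1 [Q2 Q3]].
      destruct (Q_facts n hn y0 z0 (x1 t) (x2 t) t HD Q1 Q2 Q3) as [Hb1 [Hb2 _]].
      destruct (Hd t Ht) as [D1 D2]. unfold Ft1, Ft2 in D1, D2. rewrite !clamp_id in D1, D2 by lra.
      auto.
  - intros y z Hs. apply (convergence n hn y0 z0 y z HD Hs).
Qed.
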